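(* Let $G=(V,E)$ be a computation graph with $n=|V|$ vertices, and let $M$ be the fast-memory size. Let $J^*_G$ be the minimum number of non-trivial I/Os over all valid evaluations of $G$, let $\mathcal{O}_G$ be the set of topological evaluation orders of $G$, and for $X\in\mathcal{O}_G$ let $\mathcal{P}_X$ be the set of partitions of $V$ into parts that are each contiguous in the order $X$. Then $$J^*_G \;\geq\; \min_{X \in \mathcal{O}_G}\ \max_{P \in \mathcal{P}_X} \left( \sum_{S \in P}\ \sum_{(u,v) \in \partial S} \frac{1}{d_{out}(u)} \;-\; 2M |P| \right).$$
   Context: A computation graph is a finite directed acyclic graph $G=(V,E)$. Each vertex is an operation producing a single element, and an edge $(u,v)$ means the result of $u$ is an operand of $v$. Sources are the inputs and sinks are the outputs. Execution model: a single processor has a fast memory holding at most $M$ elements and an unbounded slow memory. Every vertex is evaluated exactly once (no recomputation), in an order that is topological with respect to $G$. To evaluate $v$, all parents of $v$ must be in fast memory; a parent not present must be read from slow memory. The eviction policy is unconstrained, but a value that is evicted while still needed by a later vertex must first be written to slow memory. Only non-trivial I/O is counted. Inputs can be placed directly into fast memory at no cost, and outputs are reported immediately at no cost when computed. However, an input that is evicted while still needed must be written to slow memory. Each transfer of one element from fast to slow memory or from slow to fast memory counts as one I/O. $d_{out}(u)$ is the out-degree of $u$ in $G$. For $S\subseteq V$, $\partial S$ is the set of edges $(u,v)\in E$ with exactly one endpoint in $S$. *)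

(* Defs.v *)
From HB Require Import structures.
From mathcomp Require Import all_boot all_order all_algebra.
Set Implicit Arguments. Unset Strict Implicit. Unset Printing Implicit Defensive.
Import Order.TTheory GRing.Theory Num.Theory.

Definition acyclic (T : finType) (e : rel T) : Prop :=
  forall u v, e u v -> ~~ connect e v u.

Definition dout (T : finType) (e : rel T) (u : T) : nat := #|[set v | e u v]|.

Section Exec.
Variables (T : finType) (e : rel T) (M : nat).

Inductive op := Compute of T | Read of T | Write of T | Evict of T.

Record state := St { fast : {set T}; slow : {set T}; done : {set T} }.

Definition init_state : state := St set0 set0 set0.

Definition needed (st : state) (v : T) : bool :=
  [exists w, e v w && (w \notin done st)].

Definition step (st : state) (o : op) : option state :=
  match o with
  | Compute v =>
      (* evaluate v once: all parents in fast memory, result goes to fast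
         memory; sources (inputs) are placed in fast memory at no cost,
         sinks (outputs) are reported at no cost *)
      if [&& v \notin done st, [forall u, e u v ==> (u \in fast st)]
           & #|v |: fast st| <= M]
      then Some (St (v |: fast st) (slow st) (v |: done st)) else None
  | Read v =>
      if (v \in slow st) && (#|v |: fast st| <= M)
      then Some (St (v |: fast st) (slow st) (done st)) else None
  | Write v =>
      if v \in fast st then Some (St (fast st) (v |: slow st) (done st)) else None
  | Evict v =>
      if (v \in fast st) && (needed st v ==> (v \in slow st))
      then Some (St (fast st :\ v) (slow st) (done st)) else None
  end.

Fixpoint run (st : state) (s : seq op) : option state :=
  match s with
  | [::] => Some st
  | o :: s' => match step st o with Some st' => run st' s' | None => None end
  end.

Definition valid_evaluation (s : seq op) : Prop :=
  exists st, run init_state s = Some st /\ done st = setT.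

Definition io_cost (s : seq op) : nat :=
  count (fun o => match o with Read _ | Write _ => true | _ => false end) s.

End Exec.

Definition topo_order (T : finType) (e : rel T) (X : seq T) : Prop :=
  [/\ uniq X, forall v, v \in X
    & forall u v, e u v -> index u X < index v X].

Definition contiguous_partition (T : finType) (X : seq T) (P : {set {set T}}) : Prop :=
  partition P [set: T] /\
  forall S, S \in P -> forall x y z, x \in S -> z \in S ->
    index x X <= index y X -> index y X <= index z X -> y \in S.

Local Open Scope ring_scope.

Definition part_value (T : finType) (e : rel T) (M : nat) (P : {set {set T}}) : rat :=
  \sum_(S in P) \sum_(p : T * T | e p.1 p.2 && ((p.1 \in S) != (p.2 \in S)))
      ((dout e p.1)%:R)^-1
  - 2%:R * M%:R * (#|P|)%:R.

(* Main.v *)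
Require Import Defs.
From mathcomp Require Import all_boot all_order all_algebra.
From mathcomp Require Import lra.
Set Implicit Arguments. Unset Strict Implicit. Unset Printing Implicit Defensive.
Section Steps.
Variables (T : finType) (e : rel T) (M : nat).

Definition step' (st : state T) (o : op T) := odflt st (step e M st o).
Definition runT (st : state T) (l : seq (op T)) := foldl step' st l.
Definition getC (o : op T) := if o is Compute v then Some v else None.
Definition isIO (o : op T) := match o with Read _ | Write _ => true | _ => false end.
Definition opv (o : op T) := match o with Compute v | Read v | Write v | Evict v => v end.

Definition Inv (st : state T) :=
  [/\ fast st \subset done st, slow st \subset done st, #|fast st| <= M &
      forall u, u \in done st -> needed e st u -> (u \in fast st) || (u \in slow st)].

Lemma step_facts st st' o : step e M st o = Some st' ->
  [/\ done st' = (if o is Compute v then v |: done st else done st),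
      forall u, u \in fast st' -> [\/ u \in fast st, o = Read u | o = Compute u],
      forall u, u \in slow st' -> u \in slow st \/ o = Write u,
      slow st \subset slow st' &
      forall v, o = Compute v -> [/\ v \notin done st, forall u, e u v -> u \in fast st
                                   & fast st' = v |: fast st]].
Proof.
case: o => v /=.
- case: ifP => // /and3P [Hv /forallP Hf Hc] [<-] /=; split => //.
  + move=> u; rewrite in_setU1; case/orP => [/eqP ->|H]; [exact: Or33|exact: Or31].
  + by move=> u ->; left.
  + by move=> w [<-]; split => // u Huv; exact: (implyP (Hf u) Huv).
- case: ifP => // /andP [Hv Hc] [<-] /=; split => //.
  + move=> u; rewrite in_setU1; case/orP => [/eqP ->|H]; [exact: Or32|exact: Or31].
  + by move=> u ->; left.
- case: ifP => // Hv [<-] /=; split => //.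
  + by move=> u ->; exact: Or31.
  + move=> u; rewrite in_setU1; case/orP => [/eqP ->|]; by [right|left].
  + by apply/subsetP => u Hu; rewrite in_setU1 Hu orbT.
- case: ifP => // /andP [Hv Hc] [<-] /=; split => //.
  + by move=> u; rewrite in_setD1 => /andP [_ H]; exact: Or31.
  + by move=> u ->; left.
Qed.

Lemma Inv_step st o : Inv st -> Inv (step' st o).
Proof.
rewrite /step'; case Hs: (step e M st o) => [st'|] //= [H1 H2 H3 H4].
move: Hs; case: o => v /=.
- case: ifP => // /and3P [Hv /forallP Hf Hc] [<-]; split => //=.
  + by apply: setUS.
  + by apply: (subset_trans H2); apply: subsetUr.
  + move=> u; rewrite !in_setU1; case: eqP => [->|_] //= Hu Hn.
    apply: H4 => //; move: Hn; rewrite /needed /=.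
    case/existsP => w /andP [Heu]; rewrite in_setU1 negb_or => /andP [_ Hw].
    by apply/existsP; exists w; rewrite Heu.
- case: ifP => // /andP [Hv Hc] [<-]; split => //=.
  + by apply/subsetP => u; rewrite in_setU1 => /orP [/eqP ->|/(subsetP H1)//]; apply: (subsetP H2).
  + by move=> u Hu Hn; rewrite in_setU1; case/orP: (H4 u Hu Hn) => ->; rewrite ?orbT.
- case: ifP => // Hv [<-]; split => //=.
  + by apply/subsetP => u; rewrite in_setU1 => /orP [/eqP ->|/(subsetP H2)//]; apply: (subsetP H1).
  + by move=> u Hu Hn; rewrite in_setU1; case/orP: (H4 u Hu Hn) => ->; rewrite ?orbT.
- case: ifP => // /andP [Hv Hc] [<-]; split => //=.
  + by apply: subset_trans H1; apply: subsetDl.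
  + by apply: leq_trans H3; apply: subset_leq_card; apply: subsetDl.
  + move=> u Hu Hn; rewrite in_setD1.
    have Hn' : needed e st u by [].
    case: (eqVneq u v) => [Huv|Huv] /=.
    * by subst u; move: (implyP Hc Hn').
    * exact: (H4 u Hu Hn').
Qed.

Lemma Inv_init : Inv (init_state T).
Proof. by split => //=; rewrite ?cards0 // => u; rewrite in_set0. Qed.

Lemma Inv_runT st l : Inv st -> Inv (runT st l).
Proof. by elim: l st => //= o l IH st Hi; apply: IH; apply: Inv_step. Qed.

Lemma run_runT st l st' : run e M st l = Some st' -> runT st l = st'.
Proof.
elim: l st => [|o l IH] st /=; first by case.
rewrite /runT /= /step'; case: (step e M st o) => //= x; exact: IH.
Qed.

Lemma run_cat st a b st' : run e M st (a ++ b) = Some st' ->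
  exists m, run e M st a = Some m /\ run e M m b = Some st'.
Proof.
elim: a st => [|o a IH] st /=; first by exists st.
case: (step e M st o) => //= x; exact: IH.
Qed.

Lemma run_done st l st' : run e M st l = Some st' ->
  done st' = done st :|: [set v | v \in pmap getC l].
Proof.
elim: l st => [|o l IH] st /=.
  by case=> <-; apply/setP => v; rewrite !inE in_nil orbF.
case Hs: (step e M st o) => [x|] // /IH ->.
have [Hd _ _ _ _] := step_facts Hs.
rewrite Hd; apply/setP => v; case: o Hs Hd => w Hs Hd /=; rewrite !inE ?orbA //.
by rewrite (orbC (v == w)).
Qed.

Lemma run_uniq st l st' : run e M st l = Some st' ->
  uniq (pmap getC l) && all (fun v => v \notin done st) (pmap getC l).
Proof.
elim: l st => [|o l IH] st //=.
case Hs: (step e M st o) => [x|] // /IH /andP [Hu Ha].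
have [Hd _ _ _ Hc] := step_facts Hs.
case: o Hs Hd Hc => w Hs Hd Hc /=; rewrite /= ?Hu;
  try (apply/allP => v Hv; have := allP Ha v Hv; rewrite Hd; done).
have [Hw _ _] := Hc w erefl.
have Hn : w \notin pmap getC l.
  apply/negP => Hin; have := allP Ha w Hin; by rewrite Hd setU11.
have Ha' : all (fun v => v \notin done st) (pmap getC l).
  apply/allP => v Hv; have := allP Ha v Hv; rewrite Hd in_setU1 negb_or.
  by case/andP.
by rewrite Hn Hw Ha'.
Qed.

End Steps.
Section Run.
Variables (T : finType) (e : rel T) (M : nat) (o0 : op T) (s : seq (op T)) (stf : state T).
Hypothesis Hrun : run e M (init_state T) s = Some stf.
Hypothesis Hdone : done stf = setT.

Definition st k := runT e M (init_state T) (take k s).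
Definition D k := done (st k).
Definition X := pmap (@getC T) s.

Lemma st_run k : run e M (init_state T) (take k s) = Some (st k).
Proof.
have := Hrun; rewrite -{1}(cat_take_drop k s); case/run_cat => m1 [Hm1 _].
by rewrite /st (run_runT Hm1).
Qed.

Lemma st_succ k : (k < size s /\ step e M (st k) (nth o0 s k) = Some (st k.+1))
  \/ (size s <= k /\ st k.+1 = st k).
Proof.
case: (ltnP k (size s)) => Hk; last first.
  by right; split => //; rewrite /st !take_oversize // ltnW.
left; split => //.
have := st_run k.+1; rewrite (take_nth o0 Hk) -cats1 => /run_cat [m [Hm]].
rewrite st_run in Hm; case: Hm => <- /=.
by case: (step e M (st k) (nth o0 s k)).
Qed.

Lemma D_pmap k : D k = [set v | v \in pmap (@getC T) (take k s)].
Proof. by rewrite /D (run_done (st_run k)) /= set0U. Qed.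

Lemma X_uniq : uniq X.
Proof. by case/andP: (run_uniq Hrun). Qed.

Lemma inX v : v \in X.
Proof.
have := run_done Hrun; rewrite Hdone /= set0U => /setP /(_ v).
by rewrite !inE.
Qed.

Lemma core k x y : x \in D k -> y \notin D k -> index x X < index y X.
Proof.
rewrite D_pmap !inE => Hx Hy.
rewrite /X -(cat_take_drop k s) pmap_cat !index_cat Hx (negbTE Hy).
by apply: ltn_addr; rewrite index_mem.
Qed.

Lemma D0 : D 0 = set0.
Proof. by rewrite /D /st take0. Qed.

Lemma Dend k : size s <= k -> D k = setT.
Proof. by move=> Hk; rewrite /D /st take_oversize // (run_runT Hrun). Qed.

Lemma Inv_st k : Inv e M (st k).
Proof. exact: Inv_runT (Inv_init _ _). Qed.

Lemma Dstep k : D k.+1 = D k \/ exists w, [/\ k < size s, nth o0 s k = Compute w,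
  D k.+1 = w |: D k, w \notin D k
  & step e M (st k) (Compute w) = Some (st k.+1)].
Proof.
case: (st_succ k) => [[Hk Hs]|[_ Heq]]; last by left; rewrite /D Heq.
have [Hd _ _ _ Hc] := step_facts Hs.
move: Hd Hc Hs; rewrite /D; case: (nth o0 s k) => w Hd Hc Hs; try (by left).
have [H1 H2 H3] := Hc w erefl.
by right; exists w; split.
Qed.

Lemma Dmono k d : D k \subset D (k + d).
Proof.
elim: d => [|d IH]; first by rewrite addn0.
rewrite addnS; case: (Dstep (k + d)) => [->|[w [_ _ -> _ _]]] //.
by apply: (subset_trans IH); apply: subsetUr.
Qed.

Lemma Dmono' k k' : k <= k' -> D k \subset D k'.
Proof. by move=> H; rewrite -(subnKC H); apply: Dmono. Qed.

Lemma compute_time v : exists j, [/\ j < size s, nth o0 s j = Compute v,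
  v \notin D j, v \in D j.+1 & step e M (st j) (Compute v) = Some (st j.+1)].
Proof.
have Hex : exists k, v \in D k.+1 by exists (size s); rewrite Dend ?inE.
case: (ex_minnP Hex) => j Hj Hmin.
have Hnot : v \notin D j.
  case: j Hj Hmin => [|j] Hj Hmin; first by rewrite D0 inE.
  by apply/negP => H; have := Hmin j H; rewrite ltnn.
case: (Dstep j) => [Heq|[w [H1 H2 H3 H4 H5]]].
  by rewrite Heq in Hj; rewrite Hj in Hnot.
have Hvw : v = w by move: Hj; rewrite H3 in_setU1 (negbTE Hnot) orbF => /eqP.
by subst w; exists j; split.
Qed.

Lemma enter_fast k d u : u \in D k -> u \notin fast (st k) -> u \in fast (st (k + d)) ->
  exists i, [/\ k <= i, i < k + d, i < size s & nth o0 s i = Read u].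
Proof.
move=> HD Hf; elim: d => [|d IH]; first by rewrite addn0 (negbTE Hf).
rewrite addnS => Hin.
case Hold: (u \in fast (st (k + d))).
  case: (IH Hold) => i [H1 H2 H3 H4]; exists i; split => //; exact: ltnW.
case: (st_succ (k + d)) => [[Hk Hs]|[_ Heq]]; last by rewrite Heq Hold in Hin.
have [_ Hfa _ _ Hc] := step_facts Hs.
case: (Hfa u Hin) => [|Hr|Hco]; first by rewrite Hold.
  by exists (k + d); split => //; rewrite leq_addr.
have [Hnd _ _] := Hc u Hco.
by have := subsetP (Dmono k d) u HD; rewrite /D (negbTE Hnd).
Qed.

Lemma enter_slow k d u : u \notin slow (st k) -> u \in slow (st (k + d)) ->
  exists i, [/\ k <= i, i < k + d, i < size s & nth o0 s i = Write u].
Proof.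
move=> Hf; elim: d => [|d IH]; first by rewrite addn0 (negbTE Hf).
rewrite addnS => Hin.
case Hold: (u \in slow (st (k + d))).
  case: (IH Hold) => i [H1 H2 H3 H4]; exists i; split => //; exact: ltnW.
case: (st_succ (k + d)) => [[Hk Hs]|[_ Heq]]; last by rewrite Heq Hold in Hin.
have [_ _ Hsl _ _] := step_facts Hs.
case: (Hsl u Hin) => [|Hr]; first by rewrite Hold.
by exists (k + d); split => //; rewrite leq_addr.
Qed.


Lemma topo_edge u v : e u v -> index u X < index v X.
Proof.
move=> Huv; case: (compute_time v) => j [Hj Hnth HnD HD Hs].
have [_ _ _ _ Hc] := step_facts Hs; have [_ Hp _] := Hc v erefl.
have [H1 _ _ _] := Inv_st j.
exact: (core (subsetP H1 u (Hp u Huv)) HnD).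
Qed.

Definition belongs (i : nat) (S : {set T}) := (S :&: D i != set0) && ~~ (S \subset D i).
Definition C (S : {set T}) := [set u | [exists v, e u v && ((u \in S) != (v \in S))]].

Lemma belongs_unique P (HP : contiguous_partition X P) i S S' :
  S \in P -> S' \in P -> belongs i S -> belongs i S' -> S = S'.
Proof.
case: HP => /and3P [_ Htriv _] Hc HS HS' /andP [/set0Pn [v Hv] Hw] /andP [/set0Pn [v' Hv'] Hw'].
case/subsetPn: Hw => w HwS HwD; case/subsetPn: Hw' => w' HwS' HwD'.
move: Hv Hv' => /setIP [HvS HvD] /setIP [HvS' HvD'].
have key : forall x, x \in S -> x \in S' -> S = S'.
  move=> x Hx Hx'; apply/eqP; apply: contraT => Hne.
  have Hdis := (trivIsetP Htriv) S S' HS HS' Hne.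
  by rewrite (disjointFr Hdis Hx) in Hx'.
case: (leqP (index v X) (index v' X)) => H.
  apply: (key v') => //; apply: (Hc S HS v v' w) => //.
  exact: ltnW (core HvD' HwD).
apply: (key v) => //; apply: (Hc S' HS' v' v w') => //.
  exact: ltnW.
exact: ltnW (core HvD HwD').
Qed.

Lemma part_bound P (HP : contiguous_partition X P) S : S \in P ->
  #|C S| <= M + M + \sum_(i < size s) (isIO (nth o0 s i) && belongs i S).
Proof.
move=> HS.
have Sne : S != set0.
  case: HP => /and3P [_ _ H0] _; apply/negP => /eqP HS0; by rewrite -HS0 HS in H0.
have exa : exists k, S :&: D k != set0 by exists (size s); rewrite Dend // setIT.
have exb : exists k, S \subset D k by exists (size s); rewrite Dend // subsetT.
case: (ex_minnP exa) => a Ha Hamin.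
case: (ex_minnP exb) => b Hb Hbmin.
have Hcont := HP.2.
set I := [set i : 'I_(size s) | isIO (nth o0 s i) && belongs i S].
have -> : \sum_(i < size s) (isIO (nth o0 s i) && belongs i S) = #|I|.
  rewrite -sum1_card [RHS]big_mkcond /=; apply: eq_bigr => i _; rewrite inE.
  by case: (_ && _).
have sub : C S \subset fast (st a) :|: fast (st b) :|: [set opv (nth o0 s (nat_of_ord i)) | i in I].
  apply/subsetP => u; rewrite inE => /existsP [v /andP [Huv Hne]].
  case HuS: (u \in S); rewrite HuS in Hne.
  -
    have HvS : v \notin S by move: Hne; case: (v \in S).
    case: (compute_time u) => j [Hj Hnth HnD HD Hs].
    have HuDb : u \in D b := subsetP Hb u HuS.
    have HvDb : v \notin D b.
      case: b Hb Hbmin HuDb => [|b'] Hb Hbmin HuDb; first by rewrite D0 inE in HuDb.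
      have notsub : ~~ (S \subset D b').
        by apply/negP => H; have := Hbmin b' H; rewrite ltnn.
      case/subsetPn: notsub => z HzS HzD.
      apply/negP => HvD.
      case HvD' : (v \in D b').
        have H1 := core HvD' HzD; have H2 := topo_edge Huv.
        have := Hcont S HS u v z HuS HzS (ltnW H2) (ltnW H1).
        by rewrite (negbTE HvS).
      case: (Dstep b') => [Heq|[w [_ _ Heq _ _]]]; first by rewrite Heq HvD' in HvD.
      have Hvw : v = w by move: HvD; rewrite Heq in_setU1 HvD' orbF => /eqP.
      have := subsetP Hb z HzS; rewrite Heq in_setU1 (negbTE HzD) orbF => /eqP Hzw.
      by subst; rewrite HzS in HvS.
    have Hneed : needed e (st b) u by apply/existsP; exists v; rewrite Huv HvDb.
    have [_ H2 _ H4] := Inv_st b.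
    case/orP: (H4 u HuDb Hneed) => Hin; first by rewrite !inE Hin orbT.
    have Hjb : j < b.
      rewrite ltnNge; apply/negP => Hbj.
      by have := subsetP (Dmono' Hbj) u HuDb; rewrite (negbTE HnD).
    have Hns : u \notin slow (st j).
      by apply/negP => H; have [_ H2' _ _] := Inv_st j; rewrite (subsetP H2' u H) in HnD.
    have Hin' : u \in slow (st (j + (b - j))) by rewrite subnKC // ltnW.
    case: (enter_slow Hns Hin') => i [Hji Hib Hi Hnthi].
    rewrite subnKC ?(ltnW Hjb) // in Hib.
    have Hji' : j < i.
      rewrite ltn_neqAle Hji andbT; apply/eqP => Hij; subst i.
      by rewrite Hnth in Hnthi.
    have HuDi : u \in D i := subsetP (Dmono' Hji') u HD.
    apply/setUP; right; apply/imsetP; exists (Ordinal Hi); last by rewrite /= Hnthi.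
    rewrite inE /= Hnthi /= /belongs; apply/andP; split.
      by apply/set0Pn; exists u; rewrite inE HuS.
    by apply/negP => H; have := Hbmin i H; rewrite leqNgt Hib.
  -
    have HvS : v \in S by move: Hne; case: (v \in S).
    case: (compute_time v) => j [Hj Hnth HnD HD Hs].
    have [_ _ _ _ Hc] := step_facts Hs; have [_ Hp Hf] := Hc v erefl.
    have Huj1 : u \in fast (st j.+1) by rewrite Hf in_setU1 Hp ?orbT.
    have Haj : a <= j.+1 by apply: Hamin; apply/set0Pn; exists v; rewrite inE HvS.
    case/set0Pn: Ha => x /setIP [HxS HxD].
    have HuDa : u \in D a.
      apply: contraT => HuD.
      have H1 := core HxD HuD; have H2 := topo_edge Huv.
      have := Hcont S HS x u v HxS HvS (ltnW H1) (ltnW H2).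
      by rewrite HuS.
    case Hfa : (u \in fast (st a)); first by rewrite !inE Hfa.
    have Hin' : u \in fast (st (a + (j.+1 - a))) by rewrite subnKC.
    case: (enter_fast HuDa (negbT Hfa) Hin') => i [Hai Hij Hi Hnthi].
    rewrite subnKC // ltnS in Hij.
    apply/setUP; right; apply/imsetP; exists (Ordinal Hi); last by rewrite /= Hnthi.
    rewrite inE /= Hnthi /= /belongs; apply/andP; split.
      by apply/set0Pn; exists x; rewrite inE HxS (subsetP (Dmono' Hai)).
    apply/negP => H; have := subsetP (Dmono' Hij) v (subsetP H v HvS).
    by rewrite (negbTE HnD).
apply: (leq_trans (subset_leq_card sub)).
have [_ _ Ha' _] := Inv_st a; have [_ _ Hb' _] := Inv_st b.
rewrite !cardsU; apply: (leq_trans (leq_subr _ _)); apply: leq_add; last exact: leq_imset_card.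
by apply: (leq_trans (leq_subr _ _)); apply: leq_add.
Qed.

End Run.
Import Order.TTheory GRing.Theory Num.Theory.
Local Open Scope ring_scope.
Lemma bound_rat (T : finType) (e : rel T) (S : {set T}) :
  \sum_(p : T * T | e p.1 p.2 && ((p.1 \in S) != (p.2 \in S)))
      ((dout e p.1)%:R)^-1 <= (#|C e S|)%:R :> rat.
Proof.
have -> : \sum_(p : T * T | e p.1 p.2 && ((p.1 \in S) != (p.2 \in S)))
      ((dout e p.1)%:R)^-1 =
  \sum_u \sum_(v | e u v && ((u \in S) != (v \in S))) ((dout e u)%:R)^-1 :> rat.
  by rewrite pair_big_dep.
rewrite -sum1_card natr_sum [X in _ <= X]big_mkcond /=.
apply: ler_sum => u _.
case: ifP => HC.
  apply: (@le_trans _ _ (\sum_(v | e u v) ((dout e u)%:R)^-1 : rat)).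
    rewrite big_mkcond [X in _ <= X]big_mkcond /=; apply: ler_sum => v _.
    case: (e u v) => /=; last by []. by case: ifP => // _; rewrite invr_ge0 ler0n.
  have -> : \sum_(v | e u v) ((dout e u)%:R)^-1 =
            \sum_(v in [set w | e u w]) ((dout e u)%:R)^-1 :> rat.
    by apply: eq_bigl => v; rewrite inE.
  rewrite sumr_const /dout -(mulr_natr ((#|[set w | e u w]|)%:R)^-1) mulVf //.
  move: HC; rewrite inE => /existsP [v /andP [Huv _]].
  rewrite pnatr_eq0 -lt0n; apply/card_gt0P; exists v; by rewrite inE.
rewrite big_pred0 // => v; apply/negP => /andP [Huv Hne].
by move: HC; rewrite inE => /existsP; apply; exists v; rewrite Huv.
Qed.

Lemma count_ord (T : Type) (a : pred T) (s : seq T) (x0 : T) :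
  count a s = (\sum_(i < size s) a (nth x0 s i))%N.
Proof.
rewrite -sum1_count big_mkcond (big_nth x0) big_mkord /=.
by apply: eq_bigr => i _; case: (a _).
Qed.

Lemma nat_bound (T : finType) (e : rel T) (M : nat) (o0 : op T) (s : seq (op T))
  (stf : state T) (Hrun : run e M (init_state T) s = Some stf)
  (Hdone : done stf = setT) (P : {set {set T}}) (HP : contiguous_partition (X s) P) :
  (\sum_(S in P) #|C e S| <= (M + M) * #|P| + io_cost s)%N.
Proof.
apply: (@leq_trans (\sum_(S in P) (M + M + \sum_(i < size s) (isIO (nth o0 s i) && belongs e M s i S)))%N).
  by apply: leq_sum => S HS; apply: (part_bound o0 Hrun Hdone HP HS).
rewrite big_split /= sum_nat_const mulnC leq_add2l.
rewrite exchange_big /=.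
have -> : io_cost s = count (@isIO T) s by [].
rewrite (count_ord _ _ o0); apply: leq_sum => i _.
case: (isIO _) => /=; last by rewrite big1.
have -> : (\sum_(S in P) belongs e M s i S = \sum_(S in [set S in P | belongs e M s i S]) 1)%N.
  rewrite [RHS]big_mkcond [LHS]big_mkcond /=; apply: eq_bigr => S _; rewrite inE.
  by case: (S \in P); case: (belongs _ _ _ _ _).
rewrite sum1_card; apply/card_le1_eqP => S S'; rewrite !inE => /andP [HS HbS] /andP [HS' HbS'].
by rewrite (belongs_unique Hrun HP HS HS' HbS HbS').
Qed.

Unset Implicit Arguments.
Theorem theorem4p2 (T : finType) (e : rel T) (M : nat) :
  acyclic e ->
  forall s : seq (op T), valid_evaluation e M s ->
  exists X : seq T, topo_order e X /\
    forall P : {set {set T}}, contiguous_partition X P ->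
      part_value e M P <= (io_cost s)%:R.
Proof.
move=> _ s [stf [Hrun Hdone]].
case: (pickP (@predT T)) => [x _ | Hempty]; last first.
  exists [::]; split.
    by split => // [v|u v]; have := Hempty v.
  move=> P _; rewrite /part_value big1 ?sub0r.
    by rewrite -!natrM; apply: (@le_trans _ _ 0); rewrite ?oppr_le0 ler0n.
  by move=> S _; rewrite big1 // => p; have := Hempty p.1.
exists (X s); split.
  split; [exact: (X_uniq Hrun) | exact: (inX Hrun Hdone) | ].
  by move=> u v Huv; exact: (topo_edge (Compute x) Hrun Hdone Huv).
move=> P HP; rewrite /part_value.
have H1 : \sum_(S in P) \sum_(p : T * T | e p.1 p.2 && ((p.1 \in S) != (p.2 \in S)))
      ((dout e p.1)%:R)^-1 <= (\sum_(S in P) #|C e S|)%:R :> rat.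
  by rewrite natr_sum; apply: ler_sum => S _; apply: bound_rat.
have H2 := nat_bound (Compute x) Hrun Hdone HP.
rewrite -(ler_nat rat) natrD natrM natrD in H2.
have H3 : (2%:R : rat) = 1 + 1 by [].
rewrite H3; lra.
Qed.
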